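(* Let $P_0=P_0(q)=\sum_{j\ge1}(-1)^{j-1}(2j-1)q^{j(j-1)/2}$ and let $\Theta=q\frac{d}{dq}$. For every $m\ge1$, \[\Theta^m(P_0)=-3P_0P_m,\] where $P_m$ is a polynomial in $A_0,A_1,\dots,A_{m-1}$ with rational coefficients. Moreover $P_1=A_0$ and $P_{m+1}=\Theta(P_m)-3A_0P_m$ for $m\ge1$.
   Context: For $m\ge1$ let $\sigma(m)$ be the sum of positive divisors of $m$, and $A_i=A_i(q)=\sum_{m\ge1}m^i\sigma(m)q^m$ for $i\ge0$ (so $\Theta(A_i)=A_{i+1}$). Everything is regarded as power series in $q$ (equivalently, functions of $0<q<1$). *)

(* Defs.v *)
(* Formal power series in q with rational coefficients are
   represented by their coefficient sequences  nat -> rat  (coefficient of q^n). *)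
From mathcomp Require Import all_boot all_order all_algebra.
Set Implicit Arguments. Unset Strict Implicit. Unset Printing Implicit Defensive.
Import Order.TTheory GRing.Theory Num.Theory.
Local Open Scope ring_scope.

Definition series := nat -> rat.

Definition sconst (c : rat) : series := fun n => if n == 0%N then c else 0.
Definition sadd (f g : series) : series := fun n => f n + g n.
Definition sscale (c : rat) (f : series) : series := fun n => c * f n.
Definition smul (f g : series) : series :=
  fun n => \sum_(k < n.+1) f k * g (n - k)%N.
Definition Theta (f : series) : series := fun n => n%:R * f n.

Definition sigma (m : nat) : nat := \sum_(d <- divisors m) d.

Definition A (i : nat) : series :=
  fun n => if n == 0%N then 0 else (n ^ i * sigma n)%:R.

(* P_0 = sum_{j>=1} (-1)^(j-1) (2j-1) q^(j(j-1)/2) ; the exponent j(j-1)/2 = n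
   forces j <= n+1, so the sum below has at most one nonzero term. *)
Definition P0 : series :=
  fun n => \sum_(1 <= j < n.+2 | ((j * j.-1) %/ 2 == n)%N)
             (-1) ^+ j.-1 * (2 * j - 1)%:R.

Inductive polyInA (m : nat) : series -> Prop :=
  | polyInA_const c : polyInA m (sconst c)
  | polyInA_gen i : (i < m)%N -> polyInA m (A i)
  | polyInA_add f g : polyInA m f -> polyInA m g -> polyInA m (sadd f g)
  | polyInA_mul f g : polyInA m f -> polyInA m g -> polyInA m (smul f g).

(* Main.v *)
Require Import Defs.
From mathcomp Require Import all_boot all_order all_algebra.
From mathcomp Require Import ring zify.
From Stdlib Require Import FunctionalExtensionality.
Import GRing.Theory Num.Theory.
Local Open Scope ring_scope.

Section QB.
Variable R : comNzRingType.
Variable q : R.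

Fixpoint qb (N k : nat) : R :=
  match N, k with
  | 0, 0 => 1
  | 0, _.+1 => 0
  | N'.+1, 0 => 1
  | N'.+1, k'.+1 => qb N' k'.+1 + q ^+ (N' - k') * qb N' k'
  end.

Lemma qb_N0 N : qb N 0 = 1. Proof. by case: N. Qed.

Lemma qb_out N k : (N < k)%N -> qb N k = 0.
Proof.
elim: N k => [|N IH] [|k] //= H.
by rewrite !IH ?mulr0 ?addr0 // ltnW.
Qed.

Lemma qb_NN N : qb N N = 1.
Proof. elim: N => [|N IH] //=. by rewrite qb_out // subnn expr0 mul1r add0r. Qed.

Definition qf m := \prod_(i < m) (1 - q ^+ i.+1).
Lemma qfS m : qf m.+1 = qf m * (1 - q ^+ m.+1).
Proof. by rewrite /qf big_ord_recr. Qed.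
Lemma qf0 : qf 0 = 1. Proof. by rewrite /qf big_ord0. Qed.

Lemma qb_fact N k : (k <= N)%N -> qf k * qf (N - k) * qb N k = qf N.
Proof.
elim: N k => [|N IH] [|k] //=.
- by rewrite qf0 !mul1r.
- by rewrite ?qb_N0 subn0 qf0 mul1r mulr1.
- rewrite ltnS subSS => kN.
  case: (ltngtP k N) kN => // [kN|->] _.
  + have e1 : (N - k = (N - k.+1).+1)%N by rewrite subnSK.
    have IH1 := IH k.+1 kN. have IH2 := IH k (ltnW kN).
    have eq : q ^+ N.+1 = q ^+ (N - k) * q ^+ k.+1 by rewrite -exprD addnS subnK // ltnW.
    have e2 : qf (N - k) = qf (N - k.+1) * (1 - q ^+ (N - k)).
      by rewrite e1 qfS -e1.
    rewrite [qf N.+1]qfS eq.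
    transitivity ((1 - q ^+ (N - k)) * (qf k.+1 * qf (N - k.+1) * qb N k.+1)
       + (1 - q ^+ k.+1) * q ^+ (N - k) * (qf k * qf (N - k) * qb N k)).
      rewrite e2 qfS; ring.
    rewrite IH1 IH2; ring.
  + rewrite qb_out // subnn expr0 qf0 qb_NN; ring.
Qed.

Definition cq N k := (-1) ^+ k * q ^+ 'C(k, 2) * qb N k.

Lemma c_N0 N : cq N 0 = 1.
Proof. by rewrite /cq qb_N0 bin0n !expr0 !mul1r. Qed.

Lemma c_out N k : (N < k)%N -> cq N k = 0.
Proof. by move=> H; rewrite /cq qb_out // mulr0. Qed.

Lemma c_rec N k : cq N.+1 k.+1 = cq N k.+1 - q ^+ N * cq N k.
Proof.
rewrite /cq /=.
case: (leqP k N) => kN.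
- rewrite binS bin1 exprD exprS.
  have -> : q ^+ N = q ^+ k * q ^+ (N - k) by rewrite -exprD subnKC.
  ring.
- by rewrite (@qb_out N k kN) !mulr0 addr0 subr0.
Qed.

Variable w : R.
Definition Sq N := \sum_(k < N.+1) cq N k * w ^+ (N - k).
Definition Uq N := \sum_(k < N.+1) cq N k * k%:R * w ^+ (N - k).

Lemma shiftL N (g : nat -> R) : g N.+1 = 0 ->
  w * \sum_(k < N.+1) g k * w ^+ (N - k) =
  g 0%N * w ^+ N.+1 + \sum_(k < N.+1) g k.+1 * w ^+ (N - k).
Proof.
move=> gN. rewrite mulr_sumr big_ord_recl [in RHS]big_ord_recr /= gN mul0r addr0 subn0.
congr (_ + _); first by rewrite exprS; ring.
apply: eq_bigr => i _ /=.
rewrite mulrCA -exprS subnSK //.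
Qed.

Lemma S_rec N : Sq N.+1 = (w - q ^+ N) * Sq N.
Proof.
rewrite /Sq big_ord_recl /= c_N0 subn0 mul1r.
under eq_bigr => i _ do rewrite /bump /= add1n subSS c_rec mulrBl.
rewrite sumrB mulrBl shiftL; last by rewrite c_out.
rewrite c_N0 mul1r mulr_sumr addrA; congr (_ - _).
by apply: eq_bigr => i _; rewrite mulrA.
Qed.

Lemma U_rec N : Uq N.+1 = w * Uq N - q ^+ N * (Uq N + Sq N).
Proof.
rewrite /Uq big_ord_recl /= mulr0 mul0r add0r.
under eq_bigr => i _ do rewrite /bump /= add1n subSS c_rec mulrBl mulrBl.
rewrite sumrB (@shiftL N (fun k => cq N k * k%:R)); last by rewrite c_out ?mul0r.
rewrite mulr0 mul0r add0r /Sq -big_split mulr_sumr /=; congr (_ - _).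
apply: eq_bigr => i _; rewrite mulrSr; ring.
Qed.

Definition Dq N := N%:R * Sq N - 2 * Uq N.

Lemma D_rec N : Dq N.+1 = (w - q ^+ N) * Dq N + (w + q ^+ N) * Sq N.
Proof. rewrite /Dq S_rec U_rec mulrSr; ring. Qed.

Lemma S_prod N : Sq N = \prod_(i < N) (w - q ^+ i).
Proof.
elim: N => [|N IH]; first by rewrite /Sq big_ord_recl big_ord0 c_N0 big_ord0 !mul1r addr0.
by rewrite S_rec IH big_ord_recr /= mulrC.
Qed.

Lemma D_sum N : Dq N = \sum_(k < N.+1) cq N k * (N%:R - 2 * k%:R) * w ^+ (N - k).
Proof.
rewrite /Dq /Sq /Uq !mulr_sumr -sumrB; apply: eq_bigr => i _; ring.
Qed.

End QB.
Arguments qb {R}. Arguments qf {R}. Arguments cq {R}. Arguments Sq {R}. Arguments Uq {R}. Arguments Dq {R}.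

Lemma D_val (R : comNzRingType) (q : R) n t :
  Dq q (q ^+ n) (n.+1 + t) =
  2 * q ^+ n * \prod_(i < n) (q ^+ n - q ^+ i) * \prod_(i < t) (q ^+ n - q ^+ (n.+1 + i)).
Proof.
elim: t => [|t IH].
  by rewrite addn0 D_rec subrr mul0r add0r S_prod big_ord0 mulr1; ring.
rewrite addnS D_rec IH S_prod.
have -> : \prod_(i < n.+1 + t) (q ^+ n - q ^+ i) = 0.
  by rewrite big_split_ord /= big_ord_recr /= subrr mulr0 mul0r.
by rewrite mulr0 addr0 big_ord_recr /=; ring.
Qed.

Notation Pq := {poly rat}.

Lemma C2 m : ('C(m, 2) * 2 + m = m * m)%N.
Proof. elim: m => [|m IH] //; rewrite binS bin1; nia. Qed.

Lemma prodXi n : \prod_(i < n) ('X : Pq) ^+ i = 'X ^+ 'C(n, 2).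
Proof.
elim: n => [|n IH]; first by rewrite big_ord0 bin0n.
by rewrite big_ord_recr /= IH -exprD binS bin1.
Qed.

Lemma rhs1 n : \prod_(i < n) (('X : Pq) ^+ n - 'X ^+ i) = (-1) ^+ n * 'X ^+ 'C(n, 2) * qf 'X n.
Proof.
rewrite (reindex_inj rev_ord_inj) /=.
transitivity (\prod_(i < n) (((-1) * ('X : Pq) ^+ (n - i.+1)) * (1 - 'X ^+ i.+1))).
  apply: eq_bigr => i _.
  have -> : ('X : Pq) ^+ n = 'X ^+ (n - i.+1) * 'X ^+ i.+1 by rewrite -exprD subnK.
  ring.
rewrite big_split big_split /= prodr_const card_ord /qf; congr (_ * _ * _).
by rewrite -prodXi [RHS](reindex_inj rev_ord_inj).
Qed.

Lemma rhs2 n : \prod_(i < n) (('X : Pq) ^+ n - 'X ^+ (n.+1 + i)) = 'X ^+ (n * n) * qf 'X n.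
Proof.
transitivity (\prod_(i < n) (('X : Pq) ^+ n * (1 - 'X ^+ i.+1))).
  apply: eq_bigr => i _. rewrite mulrBr mulr1 -exprD addSn addnS //.
by rewrite big_split /= prodr_const card_ord exprM.
Qed.

Lemma swap5 (a b cq d e : Pq) : a * b * cq * d * e = (a * cq * d) * (b * e).
Proof. ring. Qed.

Definition Gq (j : nat) : Pq := (-1) ^+ j * (2 * j + 1)%:R * 'X ^+ 'C(j.+1, 2).

Lemma T1 n j : (j <= n)%N ->
  cq 'X (n.+1 + n) (n - j) * ((n.+1 + n)%:R - 2 * (n - j)%:R) * ('X ^+ n) ^+ (n.+1 + n - (n - j))
  = (-1) ^+ n * 'X ^+ (n + 'C(n, 2) + n * n) * (Gq j * qb 'X (n.+1 + n) (n - j)).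
Proof.
move=> jn; have [r ->] : exists r, n = (r + j)%N by exists (n - j)%N; rewrite subnK.
rewrite addnK /cq /Gq.
have e : ((r + j).+1 + (r + j) - r = (2 * j).+1 + r)%N by lia.
rewrite e -exprM swap5 -exprD.
have e2 : ('C(r, 2) + (r + j) * ((2 * j).+1 + r) =
    (r + j) + 'C(r + j, 2) + (r + j) * (r + j) + 'C(j.+1, 2))%N.
  have := C2 r; have := C2 (r + j); have := C2 j.+1; nia.
rewrite e2 (exprD ('X : Pq)).
have s : (-1) ^+ r = (-1) ^+ (r + j) * (-1) ^+ j :> Pq.
  by rewrite exprD -mulrA -exprD addnn -mul2n exprM sqrrN expr1n expr1n mulr1.
have w : ((r + j).+1 + (r + j))%:R - 2 * r%:R = (2 * j + 1)%:R :> Pq.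
  by rewrite -natrM -natrB; [congr _%:R; lia | lia].
rewrite s w; ring.
Qed.

Lemma T2 n j : (j <= n)%N ->
  cq 'X (n.+1 + n) (n.+1 + j) * ((n.+1 + n)%:R - 2 * (n.+1 + j)%:R) * ('X ^+ n) ^+ (n.+1 + n - (n.+1 + j))
  = (-1) ^+ n * 'X ^+ (n + 'C(n, 2) + n * n) * (Gq j * qb 'X (n.+1 + n) (n.+1 + j)).
Proof.
move=> jn; have [r ->] : exists r, n = (r + j)%N by exists (n - j)%N; rewrite subnK.
rewrite /cq /Gq.
have e : ((r + j).+1 + (r + j) - ((r + j).+1 + j) = r)%N by lia.
rewrite e -exprM swap5 -exprD.
have e2 : ('C((r + j).+1 + j, 2) + (r + j) * r =
    (r + j) + 'C(r + j, 2) + (r + j) * (r + j) + 'C(j.+1, 2))%N.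
  have := C2 ((r + j).+1 + j); have := C2 (r + j); have := C2 j.+1; nia.
rewrite e2 (exprD ('X : Pq)).
have s : (-1) ^+ ((r + j).+1 + j) = - ((-1) ^+ (r + j) * (-1) ^+ j) :> Pq.
  by rewrite addSn exprS exprD mulN1r.
have w : ((r + j).+1 + (r + j))%:R - 2 * ((r + j).+1 + j)%:R = - (2 * j + 1)%:R :> Pq.
  have h : (2 * ((r + j).+1 + j))%:R = ((r + j).+1 + (r + j))%:R + (2 * j + 1)%:R :> Pq.
    by rewrite -natrD; congr _%:R; lia.
  by rewrite -natrM h; ring.
rewrite s w; ring.
Qed.

Lemma jac_poly n :
  \sum_(j < n.+1) Gq j * (qb 'X (n.+1 + n) (n - j) + qb 'X (n.+1 + n) (n.+1 + j))
  = 2 * qf ('X : Pq) n ^+ 2.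
Proof.
have Dv := D_val _ ('X : Pq) n n.
rewrite D_sum rhs1 rhs2 in Dv.
have e : ((n.+1 + n).+1 = n.+1 + n.+1)%N by rewrite addnS.
rewrite e big_split_ord /= (reindex_inj rev_ord_inj) /= in Dv.
pose E := (n + 'C(n, 2) + n * n)%N.
rewrite (eq_bigr (fun j : 'I_n.+1 => (-1) ^+ n * 'X ^+ E * (Gq j * qb 'X (n.+1 + n) (n - j)))) in Dv; last first.
  by move=> j _; rewrite subSS T1 // -ltnS.
rewrite [X in _ + X = _](eq_bigr (fun j : 'I_n.+1 => (-1) ^+ n * 'X ^+ E * (Gq j * qb 'X (n.+1 + n) (n.+1 + j)))) in Dv; last first.
  by move=> j _; rewrite T2 // -ltnS.

rewrite -big_split /= in Dv.
rewrite (eq_bigr (fun j : 'I_n.+1 => (-1) ^+ n * 'X ^+ E * (Gq j * (qb 'X (n.+1 + n) (n - j) + qb 'X (n.+1 + n) (n.+1 + j))))) in Dv; last first.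
  by move=> j _; rewrite !mulrDr.
rewrite -mulr_sumr in Dv.
have nz : (-1) ^+ n * ('X : Pq) ^+ E != 0.
  by rewrite mulf_neq0 // expf_neq0 // ?oppr_eq0 ?oner_eq0 ?polyX_eq0.
apply: (mulfI nz); rewrite Dv /E !exprD; ring.
Qed.

Definition pr (a b : nat) : Pq := \prod_(i < b) (1 - 'X ^+ (a + i).+1).

Lemma qf_add a b : qf ('X : Pq) (a + b) = qf 'X a * pr a b.
Proof. by rewrite /qf big_split_ord. Qed.

Lemma fac_neq0 e : (1 - ('X : Pq) ^+ e.+1) != 0.
Proof.
apply/eqP => /(congr1 (fun p : Pq => p`_0)).
by rewrite coefB coef1 coefXn /= subr0 coef0 => /eqP; rewrite oner_eq0.
Qed.

Lemma qf_neq0 m : qf ('X : Pq) m != 0.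
Proof. by apply/prodf_neq0 => i _; apply: fac_neq0. Qed.

Lemma pr_cong a b : 'X ^+ a.+1 %| pr a b - 1.
Proof.
elim: b => [|b IH]; first by rewrite /pr big_ord0 subrr dvdp0.
rewrite /pr big_ord_recr /= -/(pr a b).
have -> : pr a b * (1 - 'X ^+ (a + b).+1) - 1 = (pr a b - 1) - pr a b * 'X ^+ (a + b).+1 by ring.
apply: dvdp_sub => //; apply: dvdp_mull; apply: dvdp_exp2l; lia.
Qed.

Lemma cong_mul a m1 m2 : 'X ^+ a %| m1 - 1 -> 'X ^+ a %| m2 - 1 -> ('X : Pq) ^+ a %| m1 * m2 - 1.
Proof.
move=> h1 h2.
have -> : m1 * m2 - 1 = (m1 - 1) * m2 + (m2 - 1) by ring.
by apply: dvdp_add => //; rewrite mulrC; apply: dvdp_mull.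
Qed.

Lemma qq_gen r j M qbv : (r <= M)%N ->
  qf ('X : Pq) r * qf 'X M * qbv = qf 'X (M + r) ->
  'X ^+ r.+1 %| qf ('X : Pq) (r + j) * qbv - 1.
Proof.
move=> rM h.
rewrite qf_add in h.
have h2 : qf ('X : Pq) r * qbv = pr M r.
  apply: (mulfI (qf_neq0 M)); rewrite -h; ring.
rewrite qf_add -mulrA [pr r j * _]mulrC mulrA h2; apply: cong_mul; last exact: pr_cong.
apply: dvdp_trans (pr_cong M r); apply: dvdp_exp2l; lia.
Qed.

Lemma qq1 n j : (j <= n)%N -> 'X ^+ (n - j).+1 %| qf ('X : Pq) n * qb 'X (n.+1 + n) (n - j) - 1.
Proof.
move=> jn; have [r ->] : exists r, n = (r + j)%N by exists (n - j)%N; rewrite subnK.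
rewrite addnK; apply: (@qq_gen _ _ ((r + j).+1 + j)%N); first lia.
have := qb_fact _ ('X : Pq) ((r + j).+1 + (r + j))%N r.
have -> : ((r + j).+1 + (r + j) - r = (r + j).+1 + j)%N by lia.
have -> : ((r + j).+1 + j + r = (r + j).+1 + (r + j))%N by lia.
by apply; lia.
Qed.

Lemma qq2 n j : (j <= n)%N -> 'X ^+ (n - j).+1 %| qf ('X : Pq) n * qb 'X (n.+1 + n) (n.+1 + j) - 1.
Proof.
move=> jn; have [r ->] : exists r, n = (r + j)%N by exists (n - j)%N; rewrite subnK.
rewrite addnK; apply: (@qq_gen _ _ ((r + j).+1 + j)%N); first lia.
have := qb_fact _ ('X : Pq) ((r + j).+1 + (r + j))%N ((r + j).+1 + j)%N.
have -> : ((r + j).+1 + (r + j) - ((r + j).+1 + j) = r)%N by lia.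
have -> : ((r + j).+1 + j + r = (r + j).+1 + (r + j))%N by lia.
by rewrite [qf _ r * _]mulrC; apply; lia.
Qed.

Lemma jac_cong n : 'X ^+ n.+1 %| 2 * qf ('X : Pq) n ^+ 3 - 2 * \sum_(j < n.+1) Gq j.
Proof.
have h := jac_poly n.
have -> : 2 * qf ('X : Pq) n ^+ 3 = qf 'X n * (2 * qf 'X n ^+ 2) by ring.
rewrite -h mulr_sumr mulr_sumr -sumrB.
elim/big_ind: _ => [|x y hx hy|j _]; first exact: dvdp0.
  exact: dvdp_add.
have jn : (j <= n)%N by rewrite -ltnS.
have -> : qf 'X n * (Gq j * (qb 'X (n.+1 + n) (n - j) + qb 'X (n.+1 + n) (n.+1 + j))) - 2 * Gq j
  = Gq j * ((qf 'X n * qb 'X (n.+1 + n) (n - j) - 1) + (qf 'X n * qb 'X (n.+1 + n) (n.+1 + j) - 1)) by ring.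
rewrite /Gq -!mulrA; do 2 apply: dvdp_mull.
apply: (@dvdp_trans _ ('X ^+ 'C(j.+1, 2) * 'X ^+ (n - j).+1)).
  rewrite -exprD; apply: dvdp_exp2l; have := C2 j.+1; nia.
by apply: dvdp_mul => //; apply: dvdp_add; [apply: qq1 | apply: qq2].
Qed.

Lemma G_coef n i : (\sum_(j < n.+1) Gq j)`_i =
  \sum_(j < n.+1) (-1) ^+ j * (2 * j + 1)%:R * (i == 'C(j.+1, 2))%:R.
Proof.
rewrite coef_sum; apply: eq_bigr => j _.
have e : (((-1) ^+ j * (2 * j + 1)%:R : rat)%:P) = ((-1) ^+ j * (2 * j + 1)%:R : Pq).
  by rewrite rmorphM rmorphXn rmorphN1 ?polyC_natr ?rmorph_nat.
by rewrite /Gq -e coefCM coefXn.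
Qed.

Lemma P0_sum n i : (i <= n)%N -> P0 i =
  \sum_(j < n.+1) (-1) ^+ j * (2 * j + 1)%:R * (i == 'C(j.+1, 2))%:R.
Proof.
move=> iN.
rewrite /P0 big_mkcond /= big_add1 /= big_mkord (big_ord_widen n.+1 (fun k => if ((k.+1 * k) %/ 2 == i)%N then (-1) ^+ k * (2 * k.+1 - 1)%:R else 0 : rat)) //.
rewrite big_mkcond /=; apply: eq_bigr => j _.
have eC : ((j.+1 * j) %/ 2 = 'C(j.+1, 2))%N by rewrite bin2 divn2.
rewrite eC; case: ltnP => ji.
  have -> : (2 * j.+1 - 1 = 2 * j + 1)%N by lia.
  by rewrite [i == _]eq_sym; case: eqP => _; rewrite ?mulr1 ?mulr0.
have : (i < 'C(j.+1, 2))%N by have := C2 j.+1; nia.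
by rewrite ltn_neqAle => /andP [/negPf -> _]; rewrite mulr0.
Qed.

Lemma P0_coef n i : (i <= n)%N -> P0 i = (qf ('X : Pq) n ^+ 3)`_i.
Proof.
move=> iN; rewrite (@P0_sum n i iN) -G_coef.
have /dvdpP [qq hq] := jac_cong n.
have := congr1 (fun p : Pq => p`_i) hq.
rewrite /= coefMXn ltnS iN coefB !mulr_natl !coefMn -mulrnBl => /eqP.
by rewrite mulrn_eq0 /= subr_eq0 => /eqP ->.
Qed.

Definition hk n e : Pq := - (e%:R * \sum_(t < n) 'X ^+ (e * t.+1)).
Definition Hm n m : Pq := \sum_(k < m) hk n k.+1.

Lemma tele n e : (1 - ('X : Pq) ^+ e) * \sum_(t < n) 'X ^+ (e * t.+1) = 'X ^+ e - 'X ^+ (e * n.+1).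
Proof.
elim: n => [|n IH]; first by rewrite big_ord0 muln1 mulr0 subrr.
rewrite big_ord_recr /= mulrDr IH.
have -> : ('X : Pq) ^+ (e * n.+2) = 'X ^+ (e * n.+1) * 'X ^+ e by rewrite -exprD mulnS addnC.
ring.
Qed.

Lemma fac_log n e : (0 < e)%N -> 'X ^+ n.+1 %| 'X * (1 - ('X : Pq) ^+ e)^`() - (1 - 'X ^+ e) * hk n e.
Proof.
move=> e0.
have -> : 'X * (1 - ('X : Pq) ^+ e)^`() - (1 - 'X ^+ e) * hk n e = (- e%:R) * 'X ^+ (e * n.+1).
  have d1 : (1 : Pq)^`() = 0 by rewrite -polyC1 derivC.
  rewrite derivB d1 derivXn /hk mulrN opprK mulrCA tele sub0r mulrN mulrnAr -exprS prednK //.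
  rewrite -mulr_natl; ring.
by apply: dvdp_mull; apply: dvdp_exp2l; rewrite leq_pmull.
Qed.

Lemma qf_log n m : 'X ^+ n.+1 %| 'X * (qf ('X : Pq) m)^`() - qf 'X m * Hm n m.
Proof.
elim: m => [|m IH].
  by rewrite qf0 /Hm big_ord0 -polyC1 derivC mulr0 mulr0 subrr dvdp0.
rewrite qfS /Hm big_ord_recr /= -/(Hm n m) derivM.
have -> : 'X * ((qf 'X m)^`() * (1 - 'X ^+ m.+1) + qf 'X m * (1 - ('X : Pq) ^+ m.+1)^`())
   - qf 'X m * (1 - 'X ^+ m.+1) * (Hm n m + hk n m.+1)
   = (1 - 'X ^+ m.+1) * ('X * (qf 'X m)^`() - qf 'X m * Hm n m)
     + qf 'X m * ('X * (1 - 'X ^+ m.+1)^`() - (1 - 'X ^+ m.+1) * hk n m.+1) by ring.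
by apply: dvdp_add; apply: dvdp_mull => //; apply: fac_log.
Qed.

Lemma cube_log n : 'X ^+ n.+1 %| 'X * (qf ('X : Pq) n ^+ 3)^`() - qf 'X n ^+ 3 * (3 * Hm n n).
Proof.
rewrite deriv_exp /=.
have -> : 'X * ((qf ('X : Pq) n)^`() * qf 'X n ^+ 2 *+ 3) - qf 'X n ^+ 3 * (3 * Hm n n)
  = (3 * qf 'X n ^+ 2) * ('X * (qf 'X n)^`() - qf 'X n * Hm n n).
  rewrite -mulr_natr; ring.
by apply: dvdp_mull; apply: qf_log.
Qed.

Lemma inner_sum n e s : (0 < e)%N -> (0 < s)%N -> (s <= n)%N ->
  \sum_(t < n) (s == e * t.+1)%:R = ((e %| s)%N%:R : rat).
Proof.
move=> e0 s0 sn.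
case: (boolP (e %| s)%N) => [/dvdnP [cq hc]|nd].
  have c0 : (0 < cq)%N by move: s0; rewrite hc muln_gt0 => /andP [].
  have ct : (cq.-1 < n)%N by move: sn; rewrite hc; nia.
  rewrite (bigD1 (Ordinal ct)) //= big1 ?addr0.
    by rewrite hc mulnC prednK // eqxx.
  move=> t ht; case: eqP => // h; exfalso; move: ht => /eqP; apply.
  apply: val_inj => /=; move: h; rewrite hc mulnC; nia.
rewrite big1 // => t _; case: eqP => // h; exfalso; move: nd; by rewrite h dvdn_mulr.
Qed.

Lemma sigma_sum n s : (0 < s)%N -> (s <= n)%N -> sigma s = (\sum_(k < n) (k.+1 %| s)%N * k.+1)%N.
Proof.
move=> s0 sn.
rewrite /sigma (perm_big [seq d <- iota 1 n | (d %| s)%N]); last first.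
  apply: uniq_perm; [exact: divisors_uniq | by rewrite filter_uniq // iota_uniq |].
  move=> d; rewrite mem_filter mem_iota -dvdn_divisors //.
  case dv: (d %| s)%N => //=.
  have := dvdn_gt0 s0 dv; have := dvdn_leq s0 dv; lia.
rewrite big_filter.
have e : index_iota 1 n.+1 = iota 1 n by rewrite /index_iota subn1.
rewrite -e.
rewrite big_add1 /= big_mkord big_mkcond /=.
by apply: eq_bigr => k _; case: (k.+1 %| s)%N; rewrite ?mul1n ?mul0n.
Qed.

Lemma Hm_coef n s : (s <= n)%N -> (Hm n n)`_s = - A 0 s.
Proof.
move=> sn; rewrite /Hm /A coef_sum.
under eq_bigr => k _ do rewrite /hk coefN mulr_natl coefMn coef_sum.
under eq_bigr => k _ do under eq_bigr => t _ do rewrite coefXn.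
case: (eqVneq s 0%N) => [->|s0].
  rewrite ?eqxx oppr0 big1 // => k _; rewrite big1 ?mul0rn ?oppr0 // => t _.
have s0' : (0 < s)%N by rewrite lt0n.
under eq_bigr => k _ do rewrite (@inner_sum n k.+1 s) //.
rewrite sumrN; congr (- _).
rewrite expn0 mul1n (@sigma_sum n s s0' sn) natr_sum; apply: eq_bigr => k _.
by rewrite natrM mulr_natr.
Qed.

Lemma theta_P0 m : Theta P0 m = -3 * \sum_(k < m.+1) P0 k * A 0 (m - k)%N.
Proof.
rewrite /Theta (@P0_coef m m) //.
have /dvdpP [qq hq] := cube_log m.
have := congr1 (fun p : Pq => p`_m) hq.
rewrite /= coefMXn ltnSn coefB => /eqP; rewrite subr_eq0 => /eqP.
rewrite coefXM coef_deriv.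
have -> : (if m == 0%N then 0 else (qf ('X : Pq) m ^+ 3)`_m.-1.+1 *+ m.-1.+1)
   = m%:R * (qf 'X m ^+ 3)`_m.
  by case: m {qq hq} => [|m] /=; rewrite ?mul0r // mulr_natl.
move=> ->; rewrite coefM [RHS]mulr_sumr; apply: eq_bigr => k _.
rewrite mulr_natl coefMn Hm_coef ?leq_subr // -(@P0_coef m k (ltnSE (ltn_ord k))).
rewrite -mulr_natr; ring.
Qed.

Lemma smul_poly (u v : series) (Uq V : Pq) n :
  (forall i, (i <= n)%N -> u i = Uq`_i) -> (forall i, (i <= n)%N -> v i = V`_i) ->
  smul u v n = (Uq * V)`_n.
Proof.
move=> hu hv; rewrite /smul coefM; apply: eq_bigr => k _.
have kn : (k <= n)%N by rewrite -ltnS.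
by rewrite hu // hv // leq_subr.
Qed.

Definition Tr (f : series) n : Pq := \poly_(i < n.+1) f i.
Lemma Tr_coef f n i : (i <= n)%N -> f i = (Tr f n)`_i.
Proof. by move=> h; rewrite coef_poly ltnS h. Qed.

Lemma smul_assoc f g h : smul (smul f g) h = smul f (smul g h).
Proof.
apply: functional_extensionality => n.
rewrite (@smul_poly _ _ (Tr f n * Tr g n) (Tr h n)); last exact: Tr_coef.
  rewrite (@smul_poly _ _ (Tr f n) (Tr g n * Tr h n)) ?mulrA //; first exact: Tr_coef.
  move=> i hi; apply: smul_poly => j hj; apply: Tr_coef; exact: leq_trans hj hi.
move=> i hi; apply: smul_poly => j hj; apply: Tr_coef; exact: leq_trans hj hi.
Qed.

Lemma smul_sadd_r f g h : smul f (sadd g h) = sadd (smul f g) (smul f h).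
Proof.
apply: functional_extensionality => n; rewrite /smul /sadd -big_split /=.
by apply: eq_bigr => k _; rewrite mulrDr.
Qed.

Lemma smul_sscale_r cq f g : smul f (sscale cq g) = sscale cq (smul f g).
Proof.
apply: functional_extensionality => n; rewrite /smul /sscale mulr_sumr.
by apply: eq_bigr => k _; rewrite mulrCA.
Qed.

Lemma smul_sscale_l cq f g : smul (sscale cq f) g = sscale cq (smul f g).
Proof.
apply: functional_extensionality => n; rewrite /smul /sscale mulr_sumr.
by apply: eq_bigr => k _; rewrite mulrA.
Qed.

Lemma sscale_sconst cq f : sscale cq f = smul (sconst cq) f.
Proof.
apply: functional_extensionality => n; rewrite /smul /sscale big_ord_recl /= subn0.
rewrite big1 ?addr0 // => k _; by rewrite /sconst /= mul0r.
Qed.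

Lemma Theta_sadd f g : Theta (sadd f g) = sadd (Theta f) (Theta g).
Proof. by apply: functional_extensionality => n; rewrite /Theta /sadd mulrDr. Qed.

Lemma Theta_sscale cq f : Theta (sscale cq f) = sscale cq (Theta f).
Proof. by apply: functional_extensionality => n; rewrite /Theta /sscale mulrCA. Qed.

Lemma Theta_smul f g : Theta (smul f g) = sadd (smul (Theta f) g) (smul f (Theta g)).
Proof.
apply: functional_extensionality => n; rewrite /Theta /smul /sadd mulr_sumr -big_split /=.
apply: eq_bigr => k _.
have kn : (k <= n)%N by rewrite -ltnS.
have -> : (n%:R : rat) = k%:R + (n - k)%N%:R by rewrite -natrD subnKC.
ring.
Qed.

Lemma Theta_sconst cq : Theta (sconst cq) = sconst 0.
Proof. by apply: functional_extensionality => -[|n]; rewrite /Theta /sconst /= ?mul0r ?mulr0. Qed.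

Lemma Theta_A i : Theta (A i) = A i.+1.
Proof.
apply: functional_extensionality => -[|n]; rewrite /Theta /A /= ?mulr0 //.
by rewrite -natrM expnS mulnA.
Qed.

Lemma polyInA_mono m f : polyInA m f -> polyInA m.+1 f.
Proof.
elim => [cq|i hi|f1 g1 _ h1 _ h2|f1 g1 _ h1 _ h2].
- exact: polyInA_const.
- by apply: polyInA_gen; apply: leq_trans hi _.
- exact: polyInA_add.
- exact: polyInA_mul.
Qed.

Lemma polyInA_Theta m f : polyInA m f -> polyInA m.+1 (Theta f).
Proof.
elim => [cq|i hi|f1 g1 _ h1 _ h2|f1 g1 p1 h1 p2 h2].
- by rewrite Theta_sconst; apply: polyInA_const.
- by rewrite Theta_A; apply: polyInA_gen.
- by rewrite Theta_sadd; apply: polyInA_add.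
- rewrite Theta_smul; apply: polyInA_add; apply: polyInA_mul => //; exact: polyInA_mono.
Qed.

Lemma theta_P0_series : Theta P0 = sscale (-3) (smul P0 (A 0)).
Proof. by apply: functional_extensionality => n; rewrite theta_P0. Qed.

Fixpoint Pseq (m : nat) : series :=
  match m with
  | 0 => sconst 0
  | m'.+1 => match m' with
             | 0 => A 0
             | _ => sadd (Theta (Pseq m')) (sscale (-3) (smul (A 0) (Pseq m')))
             end
  end.

Lemma PseqS m : (1 <= m)%N -> Pseq m.+1 = sadd (Theta (Pseq m)) (sscale (-3) (smul (A 0) (Pseq m))).
Proof. by case: m. Qed.

Theorem lemma3p1 :
  exists P : nat -> series,
    (forall m : nat, (1 <= m)%N ->
       iter m Theta P0 = sscale (-3) (smul P0 (P m)) /\ polyInA m (P m)) /\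
    P 1%N = A 0 /\
    (forall m : nat, (1 <= m)%N ->
       P m.+1 = sadd (Theta (P m)) (sscale (-3) (smul (A 0) (P m)))).
Proof.
exists Pseq; split; last by split => //; exact: PseqS.
elim => [//|m IH] _.
case: m IH => [|m] IH.
  by split; [rewrite /= theta_P0_series | apply: polyInA_gen].
have [IH1 IH2] := IH isT.
split.
  rewrite iterS IH1 (@PseqS m.+1 isT) Theta_sscale Theta_smul theta_P0_series.
  rewrite smul_sscale_l smul_assoc smul_sadd_r smul_sscale_r.
  apply: functional_extensionality => n; rewrite /sscale /sadd; ring.
rewrite (@PseqS m.+1 isT); apply: polyInA_add; first exact: polyInA_Theta.
rewrite sscale_sconst; apply: polyInA_mul; first exact: polyInA_const.
apply: polyInA_mul; [exact: polyInA_gen | exact: polyInA_mono].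
Qed.
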